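(* If there exists an $(N,NK,M,R)$ $\mathcal D_{(K,K,\dots,K)}$-non-private scheme, then there exists an $(N,K,M,R)$-private scheme.
   Context: Files $W_0,\dots,W_{N-1}$ independent, each uniform on $[2^F]=\{0,\dots,2^F-1\}$, $\bar W=(W_0,\dots,W_{N-1})$; $[n]=\{0,\dots,n-1\}$. Non-private scheme for $N$ files and $L$ users with memory $M$ and rate $R$: cache encoders $C_j:[2^F]^N\to[2^{MF}]$, transmission encoder $E:[2^F]^N\times[N]^L\to[2^{RF}]$ (the demand vector is also transmitted), decoders $G_j$ with $W_{d_j}=G_j(\bar d,E(\bar W,\bar d),C_j(\bar W))$. For $\mathcal D\subseteq[N]^L$, a $\mathcal D$-non-private scheme is one satisfying this decoding condition for all $\bar W$ and all $\bar d\in\mathcal D$. For a demand vector $\bar d\in[N]^L$, its type is $(t_0,\dots,t_{N-1})$ where $t_i$ is the number of users requesting file $i$; $\mathcal D_{\bar t}$ denotes the set of demand vectors of type $\bar t$. Here $L=NK$ and $\mathcal D_{(K,\dots,K)}$ is the set of demand vectors in which every file is requested by exactly $K$ users. Private scheme $(N,K,M,R)$: $K$ users with independent uniform demands $D_k\in[N]$, $\bar D=(D_0,\dots,D_{K-1})$, $\tilde D_k$ = all demands except $D_k$; user $k$ shares a key $S_k$ (finite alphabet) with the server, server private randomness $P$ (finite alphabet), all of $P$, $S_k$, $D_k$, $W_i$ mutually independent; cache $Z_k=(C_k(S_k,P,\bar W),S_k)$ with $C_k$ valued in $[2^{MF}]$; broadcast $X=(E(\bar W,\bar D,P,\bar S),J(\bar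 D,P,\bar S))$ with $E$ valued in $[2^{RF}]$ and $J$ valued in a finite set whose $\log_2$-size is negligible compared to $F$; user $k$ recovers $W_{D_k}$ exactly from $(D_k,S_k,X,Z_k)$; and $I(\tilde D_k;Z_k,X,D_k)=0$ for all $k$. *)

(* Defs.v *)
From HB Require Import structures.
From mathcomp Require Import all_boot all_order all_algebra.
From mathcomp Require Import reals exp.
Set Implicit Arguments. Unset Strict Implicit. Unset Printing Implicit Defensive.
Import Order.TTheory GRing.Theory Num.Theory.
Local Open Scope ring_scope.

Definition files (N F : nat) := {ffun 'I_N -> 'I_(2 ^ F)}.
Definition demands (N L : nat) := {ffun 'I_L -> 'I_N}.

(* n \in [2^(r F)] = {0, ..., 2^(rF) - 1}, i.e. n + 1 <= 2^(r F). *)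
Definition fits {R : realType} (r : R) (F n : nat) : bool :=
  (n.+1)%:R <= (2 : R) `^ (r * F%:R).

Definition in_Dtype (N L : nat) (t : 'I_N -> nat) (d : demands N L) : bool :=
  [forall i : 'I_N, #|[set j : 'I_L | d j == i]| == t i].

Definition nonprivate_scheme {R : realType} (N L F : nat) (M Rt : R)
    (D : pred (demands N L)) : Prop :=
  exists (C : 'I_L -> files N F -> nat)
         (E : files N F -> demands N L -> nat)
         (G : 'I_L -> demands N L -> nat -> nat -> 'I_(2 ^ F)),
    (forall j w, fits M F (C j w)) /\
    (forall w d, fits Rt F (E w d)) /\
    (forall w d, D d -> forall j, G j d (E w d) (C j w) = w (d j)).

Section Prob.
Variables (R : realType) (Omega : finType) (pr : Omega -> R).

Definition is_pmf (T : finType) (p : T -> R) : Prop :=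
  (forall t, 0 <= p t) /\ \sum_(t : T) p t = 1.

Definition Pr (A : pred Omega) : R := \sum_(o | A o) pr o.

Definition log2 (x : R) : R := ln x / ln 2.

Definition mutual_info (T1 T2 : eqType) (X : Omega -> T1) (Y : Omega -> T2) : R :=
  \sum_(o : Omega) pr o *
    log2 (Pr [pred o' | (X o' == X o) && (Y o' == Y o)] /
          (Pr [pred o' | X o' == X o] * Pr [pred o' | Y o' == Y o])).
End Prob.

(* Sample space of a private scheme: (W, D, P, S). *)
Definition omega (N K F : nat) (TP TS : finType) :=
  (files N F * demands N K * TP * {ffun 'I_K -> TS})%type.

(* Joint law: files uniform, demands uniform, P ~ pP, S_k ~ pS k, all
   mutually independent. *)
Definition joint {R : realType} (N K F : nat) (TP TS : finType)
    (pP : TP -> R) (pS : 'I_K -> TS -> R) (o : omega N K F TP TS) : R :=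
  ((2 ^ F) ^ N)%:R^-1 * ((N ^ K)%:R)^-1 * pP o.1.2 *
  \prod_(k < K) pS k (o.2 k).

Definition other_demands (N K : nat) (k : 'I_K) (d : demands N K) : seq 'I_N :=
  [seq d j | j <- enum 'I_K & j != k].

(* (N, K, M, R)-private scheme with file size F whose auxiliary transmission
   J takes values in a finite set of size at most cJ. *)
Definition private_scheme {R : realType} (N K F : nat) (M Rt : R) (cJ : nat) : Prop :=
  exists (TP TS TJ : finType) (pP : TP -> R) (pS : 'I_K -> TS -> R)
         (C : 'I_K -> TS -> TP -> files N F -> nat)
         (E : files N F -> demands N K -> TP -> {ffun 'I_K -> TS} -> nat)
         (J : demands N K -> TP -> {ffun 'I_K -> TS} -> TJ)
         (G : 'I_K -> 'I_N -> TS -> nat -> TJ -> nat -> 'I_(2 ^ F)),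
    is_pmf pP /\ (forall k, is_pmf (pS k)) /\ (#|TJ| <= cJ)%N /\
    (forall k s p w, fits M F (C k s p w)) /\
    (forall w d p s, fits Rt F (E w d p s)) /\
    (* exact recovery (with probability one) of W_{D_k} from (D_k, S_k, X, Z_k) *)
    (forall o : omega N K F TP TS, 0 < joint pP pS o ->
       let: (w, d, p, s) := o in
       forall k, G k (d k) (s k) (E w d p s) (J d p s) (C k (s k) p w) = w (d k)) /\
    (* privacy: I(~D_k ; Z_k, X, D_k) = 0 *)
    (forall k : 'I_K,
       mutual_info (joint pP pS)
         (fun o : omega N K F TP TS => other_demands k o.1.1.2)
         (fun o : omega N K F TP TS =>
            let: (w, d, p, s) := o in
            ((C k (s k) p w, s k), (E w d p s, J d p s), d k)) = 0).

(* Main.v *)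
Require Import Defs.
From mathcomp Require Import all_boot all_order all_algebra.
From mathcomp Require Import reals exp ring.
Import GRing.Theory Num.Theory.
Local Open Scope ring_scope.


Lemma mi_zero (R : realType) (Om A B : finType) (pr : Om -> R) (c : R)
  (T1 T2 : eqType) (X : Om -> T1) (Y : Om -> T2) (psi : A * B -> Om)
  (f : A -> T1) (g : B -> T2) :
  bijective psi -> (forall o, pr o = c) -> c * #|Om|%:R = 1 ->
  (forall ab, X (psi ab) = f ab.1) -> (forall ab, Y (psi ab) = g ab.2) ->
  mutual_info pr X Y = 0.
Proof.
move=> bij hpr hc hX hY.
have PrE : forall P : pred Om, Pr pr P = c * #|[set ab | P (psi ab)]|%:R.
  move=> P; rewrite /Pr (reindex psi) /=; last by apply: onW_bij.
  under eq_bigr do rewrite hpr.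
  rewrite (eq_bigl (fun ab => ab \in [set ab | P (psi ab)])); last by move=> ab; rewrite inE.
  by rewrite sumr_const mulr_natr.
have hc' : c * (#|A|%:R * #|B|%:R) = 1.
  by rewrite -natrM -card_prod (bij_eq_card bij).
rewrite /mutual_info big1 // => o _.
set x := X o; set y := Y o.
have -> : Pr pr [pred o' | (X o' == x) && (Y o' == y)] =
   Pr pr [pred o' | X o' == x] * Pr pr [pred o' | Y o' == y].
  rewrite !PrE.
  have -> : [set ab | [pred o' | (X o' == x) && (Y o' == y)] (psi ab)]
     = setX [set a | f a == x] [set b | g b == y].
    by apply/setP => ab; rewrite !inE /= hX hY.
  have -> : [set ab | [pred o' | X o' == x] (psi ab)]
     = setX [set a | f a == x] [set: B].
    by apply/setP => ab; rewrite !inE /= hX andbT.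
  have -> : [set ab | [pred o' | Y o' == y] (psi ab)]
     = setX [set: A] [set b | g b == y].
    by apply/setP => ab; rewrite !inE /= hY.
  rewrite !cardsX !cardsT !natrM.
  set a1 := (#|[set a | f a == x]|)%:R; set b1 := (#|[set b | g b == y]|)%:R.
  set a0 := (#|A|)%:R; set b0 := (#|B|)%:R.
  have -> : c * (a1 * b0) * (c * (a0 * b1)) = c * (a1 * b1) * (c * (a0 * b0)) by ring.
  by rewrite hc' mulr1.
set q := Pr pr [pred o' | X o' == x] * Pr pr [pred o' | Y o' == y].
have [->|q0] := eqVneq q 0.
  by rewrite mul0r /log2 ln0 // mul0r mulr0.
by rewrite divff // /log2 ln1 mul0r mulr0.
Qed.

Lemma cardPK n K : #|{: 'I_n * 'I_K}| = (n * K)%N.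
Proof. by rewrite card_prod !card_ord. Qed.
Definition toV n K (p : 'I_n * 'I_K) : 'I_(n * K) := cast_ord (cardPK n K) (enum_rank p).
Definition ofV n K (j : 'I_(n * K)) : 'I_n * 'I_K := enum_val (cast_ord (esym (cardPK n K)) j).
Arguments toV {n K}.
Arguments ofV {n K}.
Lemma toVK n K : cancel (@toV n K) (@ofV n K).
Proof. by move=> p; rewrite /toV /ofV cast_ordK enum_rankK. Qed.
Lemma ofVK n K : cancel (@ofV n K) (@toV n K).
Proof. by move=> j; rewrite /toV /ofV enum_valK cast_ordKV. Qed.

Definition upd n K (a : demands n K) (k : 'I_K) (e : 'I_n) : demands n K :=
  [ffun j => if j == k then e else a j].

Arguments upd {n K}.

Lemma updE n K (a : demands n K) k e j : upd a k e j = if j == k then e else a j.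
Proof. by rewrite ffunE. Qed.

Lemma subKr' (V : zmodType) (x y : V) : x - (x - y) = y.
Proof. by rewrite opprB addrC subrK. Qed.

Theorem corollary1 (R : realType) (N K : nat) (hN : (0 < N)%N) (hK : (0 < K)%N) :
  exists cJ : nat,
  forall (F : nat) (M Rt : R),
    nonprivate_scheme (L := N * K) F M Rt (in_Dtype (fun _ : 'I_N => K)) ->
    private_scheme N K F M Rt cJ.
Proof.
case: N hN => [//|n] _.
exists (n.+1 ^ (n.+1 * K))%N.
move=> F M Rt [Cn [En [Gn [hC [hE hG]]]]].
pose t_of (d s : demands n.+1 K) : {ffun 'I_K -> 'I_n.+1} := [ffun l => d l - s l].
pose dvt (t : {ffun 'I_K -> 'I_n.+1}) : demands n.+1 (n.+1 * K) :=
  [ffun j : 'I_(n.+1 * K) => (ofV j).1 + t (ofV j).2].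
have hD : forall t, in_Dtype (fun _ => K) (dvt t).
  move=> t; apply/forallP => i; apply/eqP.
  have -> : [set j : 'I_(n.+1 * K) | dvt t j == i] = [set toV (i - t l, l) | l : 'I_K].
    apply/setP => j; rewrite inE ffunE; apply/eqP/imsetP => [h|[l _ ->]].
      exists (ofV j).2 => //.
      by rewrite -h addrK -surjective_pairing ofVK.
    by rewrite toVK /= subrK.
  rewrite card_imset ?card_ord //.
  by move=> l1 l2 /(can_inj (@toVK _ _)) [].
exists unit, 'I_n.+1, (demands n.+1 (n.+1 * K)), (fun _ => 1), (fun _ _ => ((n.+1)%:R : R)^-1),
  (fun k s _ w => Cn (toV (s, k)) w), (fun w d _ s => En w (dvt (t_of d s))),
  (fun d _ s => dvt (t_of d s)),
  (fun k _ sk e J c => Gn (toV (sk, k)) J e c).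
split; [|split; [|split; [|split; [|split; [|split]]]]].
- split=> // ; by rewrite sumr_const card_unit.
- move=> k; split=> [t|]; first by rewrite invr_ge0 ler0n.
  by rewrite sumr_const card_ord -(mulr_natr (_ ^-1)) mulVf // pnatr_eq0.
- by rewrite card_ffun !card_ord.
- by move=> k s p w; apply: hC.
- by move=> w d p s; apply: hE.
- move=> [[[w d] p] s] _ k /=.
  rewrite hG //; congr (w _).
  by rewrite ffunE toVK /= ffunE addrC subrK.
- move=> k.
  pose psi (ab : {a : demands n.+1 K | a k == 0} * (files n.+1 F * 'I_n.+1 * {ffun 'I_K -> 'I_n.+1}))
    : omega n.+1 K F unit 'I_n.+1 :=
    (ab.2.1.1, upd (val ab.1) k ab.2.1.2, tt,
     [ffun j => upd (val ab.1) k ab.2.1.2 j - ab.2.2 j]).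
  have updk : forall d : demands n.+1 K, upd d k 0 k == 0.
    by move=> d; rewrite updE eqxx.
  pose phi (o : omega n.+1 K F unit 'I_n.+1) :
    {a : demands n.+1 K | a k == 0} * (files n.+1 F * 'I_n.+1 * {ffun 'I_K -> 'I_n.+1}) :=
    (exist _ (upd o.1.1.2 k 0) (updk o.1.1.2), (o.1.1.1, o.1.1.2 k, t_of o.1.1.2 o.2)).
  have hu : forall (a : demands n.+1 K) (e : 'I_n.+1), upd a k e k = e by move=> a e; rewrite updE eqxx.
  have ht : forall (a : demands n.+1 K) (e : 'I_n.+1) (t : {ffun 'I_K -> 'I_n.+1}), t_of (upd a k e) [ffun j => upd a k e j - t j] = t.
    by move=> a e t; apply/ffunP => j; rewrite /t_of !ffunE subKr'.
  apply: (@mi_zero _ _ _ _ _ _ _ _ _ _ psi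
     (fun a => other_demands k (val a))
     (fun b => ((Cn (toV (b.1.2 - b.2 k, k)) b.1.1, b.1.2 - b.2 k),
                (En b.1.1 (dvt b.2), dvt b.2), b.1.2))).
  + exists phi.
      move=> [[a ha] [[w e] t]]; rewrite /psi /phi /= hu ht.
      congr (_, _); apply: val_inj => /=; apply/ffunP => j; rewrite !updE.
      by case: eqP => // ->; rewrite (eqP ha).
    move=> [[[w d] p] s]; rewrite /psi /phi /=; case: p.
    have hd : upd (upd d k 0) k (d k) = d.
      by apply/ffunP => j; rewrite !updE; case: eqP => // ->.
    by rewrite hd; congr (_, _); apply/ffunP => j; rewrite /t_of !ffunE subKr'.
  + by move=> o; rewrite /joint.
  + rewrite !card_prod !card_ffun !card_ord card_unit prodr_const card_ord.
    rewrite exprVn -natrX !natrM.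
    have h1 : ((2 ^ F) ^ n.+1)%:R != 0 :> R by rewrite pnatr_eq0 -lt0n !expn_gt0.
    have h2 : (n.+1 ^ K)%:R != 0 :> R by rewrite pnatr_eq0 -lt0n !expn_gt0.
    move: h1 h2; set a := (_ ^ n.+1)%:R; set b := (n.+1 ^ K)%:R => h1 h2.
    by rewrite !mulr1 -!invfM mulVf // !mulf_neq0.
  + move=> [[a ha] [[w e] t]] /=.
    rewrite /other_demands; apply/eq_in_map => j.
    by rewrite mem_filter => /andP [/negbTE hj _]; rewrite updE hj.
  + move=> [[a ha] [[w e] t]] /=.
    by rewrite ht ffunE hu.
Qed.
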